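(* Let $(\varphi_k)_{k\ge0}$ be a sequence of nonnegative weights with $\varphi_0>0$ and $\varphi(t)=\sum_k\varphi_kt^k$. For every $n\ge1$ there is a bijection between the set of (ordered) increasing diamonds of size $n$ on the label set $\{1,\dots,n\}$ with degree-weights $(\varphi_k)$ and the set of ordered increasing bucket trees of size $n$ with maximal bucket size $b=2$, degree-weights $(\varphi_k)$ and $\psi_1=1$; this bijection preserves weights. In particular both families have the same total weight for each size $n$.
   Context: Increasing diamonds are defined recursively on a finite set $L$ of integer labels. If $|L|=1$, the unique increasing diamond on $L$ is a single vertex carrying that label; its weight is $1$. If $|L|\ge2$, an increasing diamond on $L$ consists of a source vertex labelled $\min L$, a sink vertex labelled $\max L$, and an ordered sequence $(F_1,\dots,F_r)$, $r\ge0$, of increasing diamonds whose label sets partition $L\setminus\{\min L,\max L\}$ (as a directed graph: the source points to the minimal vertex of each $F_i$ and the maximal vertex of each $F_i$ points to the sink); its weight is $\varphi_r\prod_{i=1}^r w(F_i)$. The size is $|L|$. (Symbolically $\mathcal F=\mathcal Z^{\Box}+\mathcal Z^{\Box}\ast\varphi(\mathcal F)\ast\mathcal Z^{\blacksquare}$.) Ordered increasing bucket trees with $b=2$: rooted plane trees (children ordered) whose nodes have capacity $1$ or $2$, every node with a child having capacity $2$; a tree of size $n$ (sum of capacities) carries labels $1,\dots,n$, each node holding as many labels as its capacity, with every label in a node smaller than all labels in its children. Weight: product over nodes of $\varphi_{d^+(v)}$ for capacity-2 nodes ($d^+(v)$ = number of children) and $\psi_1=1$ for capacity-1 nodes. 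*)

(* Defs.v *)
From Stdlib Require Import Reals List Permutation Arith.
Import ListNotations.
Open Scope R_scope.

(** * Increasing diamonds
    [DV l]          : a single vertex labelled l (label set of size 1);
    [DN lo hi fs]   : source labelled lo, sink labelled hi, and the ordered
                      sequence fs = (F_1,...,F_r) of sub-diamonds. *)
Inductive diamond : Type :=
| DV : nat -> diamond
| DN : nat -> nat -> list diamond -> diamond.

Fixpoint dlabels (d : diamond) : list nat :=
  match d with
  | DV l => [l]
  | DN lo hi fs => lo :: hi :: flat_map dlabels fs
  end.

Inductive valid_diamond : diamond -> Prop :=
| vd_V l : valid_diamond (DV l)
| vd_N lo hi fs :
    (lo < hi)%nat ->
    (forall f, In f fs ->
       valid_diamond f /\ forall x, In x (dlabels f) -> (lo < x < hi)%nat) ->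
    NoDup (flat_map dlabels fs) ->
    valid_diamond (DN lo hi fs).

Definition is_diamond_n (n : nat) (d : diamond) : Prop :=
  valid_diamond d /\ Permutation (dlabels d) (seq 1 n).

Fixpoint wdiamond (phi : nat -> R) (d : diamond) : R :=
  match d with
  | DV _ => 1
  | DN _ _ fs => phi (length fs) * fold_right (fun f acc => wdiamond phi f * acc) 1 fs
  end.

(** * Ordered increasing bucket trees with b = 2
    [B1 a]        : node of capacity 1 holding label a (a leaf: nodes with
                    children have capacity 2);
    [B2 a b ts]   : node of capacity 2 holding labels a < b, with ordered
                    list of children ts. *)
Inductive btree : Type :=
| B1 : nat -> btree
| B2 : nat -> nat -> list btree -> btree.

Definition root_labels (t : btree) : list nat :=
  match t with
  | B1 a => [a]
  | B2 a b _ => [a; b]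
  end.

Fixpoint blabels (t : btree) : list nat :=
  match t with
  | B1 a => [a]
  | B2 a b ts => a :: b :: flat_map blabels ts
  end.

Inductive valid_btree : btree -> Prop :=
| vb_1 a : valid_btree (B1 a)
| vb_2 a b ts :
    (a < b)%nat ->
    (forall t, In t ts ->
       valid_btree t /\ forall x, In x (root_labels t) -> (b < x)%nat) ->
    valid_btree (B2 a b ts).

Definition is_btree_n (n : nat) (t : btree) : Prop :=
  valid_btree t /\ Permutation (blabels t) (seq 1 n).

Fixpoint wbtree (phi : nat -> R) (t : btree) : R :=
  match t with
  | B1 _ => 1
  | B2 _ _ ts => phi (length ts) * fold_right (fun u acc => wbtree phi u * acc) 1 ts
  end.

Definition sumR (l : list R) : R := fold_right Rplus 0 l.

(* Main.v *)
Require Import Defs.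
From Stdlib Require Import Reals List Permutation Arith Lia.
Import ListNotations.
Require Import Defs.

Fixpoint dmap (g : nat -> nat) (d : diamond) : diamond :=
  match d with
  | DV l => DV (g l)
  | DN lo hi fs => DN (g lo) (g hi) (map (dmap g) fs)
  end.

Definition succ_in (K : list nat) (H x : nat) : nat :=
  fold_right (fun y acc => if x <? y then Nat.min y acc else acc) H K.
Definition pred_in (K : list nat) (b x : nat) : nat :=
  fold_right (fun y acc => if y <? x then Nat.max y acc else acc) b K.

Fixpoint Phi (g : nat -> nat) (d : diamond) {struct d} : btree :=
  match d with
  | DV l => B1 (g l)
  | DN lo hi fs =>
      let s := fold_right Nat.min (g hi) (map g (flat_map dlabels fs)) in
      B2 (g lo) s (map (fun f => if in_dec Nat.eq_dec s (map g (dlabels f))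
                           then Phi (fun x => succ_in (map g (dlabels f)) (g hi) (g x)) f
                           else Phi g f) fs)
  end.

Fixpoint Psi (t : btree) : diamond :=
  match t with
  | B1 a => DV a
  | B2 a b ts =>
      let H := fold_right Nat.max b (flat_map blabels ts) in
      DN a H (map (fun u => if in_dec Nat.eq_dec H (blabels u)
                            then dmap (pred_in (blabels u) b) (Psi u) else Psi u) ts)
  end.

Definition diamond_ind2 (P : diamond -> Prop) (HV : forall l, P (DV l))
  (HN : forall lo hi fs, (forall f, In f fs -> P f) -> P (DN lo hi fs)) : forall d, P d :=
 fix F d := match d with
   | DV l => HV l
   | DN lo hi fs => HN lo hi fs
      ((fix G fs : forall f, In f fs -> P f :=
         match fs with
         | [] => fun f H => False_ind _ H
         | f0 :: fs' => fun f H => match H with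
             | or_introl e => eq_ind f0 P (F f0) f e
             | or_intror H' => G fs' f H' end
         end) fs)
   end.
Open Scope nat_scope.

Lemma dlabels_dmap g d : dlabels (dmap g d) = map g (dlabels d).
Proof.
  induction d as [l|lo hi fs IH] using diamond_ind2; simpl; auto.
  f_equal; f_equal. induction fs as [|f fs IHfs]; simpl; auto.
  rewrite map_app, IH by (left; auto). f_equal. apply IHfs. intros; apply IH; right; auto.
Qed.

Lemma dmap_comp g h d : dmap g (dmap h d) = dmap (fun x => g (h x)) d.
Proof.
  induction d as [l|lo hi fs IH] using diamond_ind2; simpl; auto.
  f_equal. rewrite map_map. apply map_ext_in. auto.
Qed.

Lemma dmap_ext_in g h d : (forall x, In x (dlabels d) -> g x = h x) -> dmap g d = dmap h d.
Proof.
  induction d as [l|lo hi fs IH] using diamond_ind2; simpl; intros Hx.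
  - f_equal; auto.
  - rewrite (Hx lo), (Hx hi) by auto. f_equal. apply map_ext_in. intros f Hf.
    apply IH; auto. intros x Hxf; apply Hx. right; right. apply in_flat_map; eauto.
Qed.

Lemma dmap_id_in g d : (forall x, In x (dlabels d) -> g x = x) -> dmap g d = d.
Proof.
  intros Hx. rewrite (dmap_ext_in g (fun x => x)) by auto. clear Hx.
  induction d as [l|lo hi fs IH] using diamond_ind2; simpl; auto.
  f_equal. rewrite <- (map_id fs) at 2. apply map_ext_in; auto.
Qed.

Lemma wdiamond_dmap phi g d : wdiamond phi (dmap g d) = wdiamond phi d.
Proof.
  induction d as [l|lo hi fs IH] using diamond_ind2; simpl; auto.
  rewrite length_map. f_equal. induction fs as [|f fs IHfs]; simpl; auto.
  rewrite IH by (left; auto). f_equal. apply IHfs. intros; apply IH; right; auto.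
Qed.

Lemma Phi_ext g g' d : (forall x, In x (dlabels d) -> g x = g' x) -> Phi g d = Phi g' d.
Proof.
  revert g g'.
  induction d as [l|lo hi fs IH] using diamond_ind2; simpl; intros g g' Hx.
  - f_equal; auto.
  - assert (Hm : forall f, In f fs -> map g (dlabels f) = map g' (dlabels f)).
    { intros f Hf. apply map_ext_in. intros x Hxf. apply Hx. right; right.
      apply in_flat_map; eauto. }
    assert (Hfl : map g (flat_map dlabels fs) = map g' (flat_map dlabels fs)).
    { apply map_ext_in. intros x Hxf. apply Hx. right; right. auto. }
    rewrite Hfl, (Hx lo), (Hx hi) by auto. f_equal. apply map_ext_in. intros f Hf.
    rewrite (Hm f Hf).
    destruct in_dec.
    + apply IH; auto. intros x Hxf. rewrite Hx; auto. right; right. apply in_flat_map; eauto.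
    + apply IH; auto. intros x Hxf. apply Hx. right; right. apply in_flat_map; eauto.
Qed.

Lemma Phi_dmap g h d : Phi g (dmap h d) = Phi (fun x => g (h x)) d.
Proof.
  revert g.
  induction d as [l|lo hi fs IH] using diamond_ind2; simpl; intros g; auto.
  assert (Hfl : flat_map dlabels (map (dmap h) fs) = map h (flat_map dlabels fs)).
  { clear IH. induction fs as [|f fs IHfs]; simpl; auto.
    rewrite map_app, dlabels_dmap, IHfs. auto. }
  rewrite Hfl, map_map. f_equal. rewrite map_map. apply map_ext_in. intros f Hf.
  rewrite dlabels_dmap, map_map.
  destruct in_dec; rewrite IH; auto.
Qed.

Definition Phi0 := Phi (fun x => x).

Lemma Phi0_DN lo hi fs :
  Phi0 (DN lo hi fs) =
  let s := fold_right Nat.min hi (flat_map dlabels fs) in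
  B2 lo s (map (fun f => if in_dec Nat.eq_dec s (dlabels f)
                         then Phi0 (dmap (succ_in (dlabels f) hi) f) else Phi0 f) fs).
Proof.
  unfold Phi0. simpl. rewrite map_id. f_equal. apply map_ext_in. intros f Hf.
  rewrite map_id. destruct in_dec; auto. rewrite Phi_dmap. reflexivity.
Qed.

Lemma succ_in_spec K H x : let r := succ_in K H x in
  (r = H \/ (In r K /\ x < r)) /\ r <= H /\ (forall y, In y K -> x < y -> r <= y).
Proof.
  induction K as [|a K IH]; simpl.
  - split; [left; auto|split; [lia|tauto]].
  - destruct IH as [IH1 [IH2 IH3]].
    destruct (Nat.ltb_spec x a).
    + split; [|split].
      * destruct (Nat.min_spec a (succ_in K H x)) as [[? ->]|[? ->]]; [right; auto|].
        destruct IH1 as [?|[? ?]]; [left|right]; auto.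
      * lia.
      * intros y [<-|Hy] Hxy; [lia|]. specialize (IH3 y Hy Hxy); lia.
    + split; [|split].
      * destruct IH1 as [?|[? ?]]; [left|right]; auto.
      * lia.
      * intros y [<-|Hy] Hxy; [lia|]. auto.
Qed.

Lemma pred_in_spec K b x : let r := pred_in K b x in
  (r = b \/ (In r K /\ r < x)) /\ b <= r /\ (forall y, In y K -> y < x -> y <= r).
Proof.
  induction K as [|a K IH]; simpl.
  - split; [left; auto|split; [lia|tauto]].
  - destruct IH as [IH1 [IH2 IH3]].
    destruct (Nat.ltb_spec a x).
    + split; [|split].
      * destruct (Nat.max_spec a (pred_in K b x)) as [[? ->]|[? ->]];
          [|right; auto].
        destruct IH1 as [?|[? ?]]; [left|right]; auto.
      * lia.
      * intros y [<-|Hy] Hxy; [lia|]. specialize (IH3 y Hy Hxy); lia.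
    + split; [|split].
      * destruct IH1 as [?|[? ?]]; [left|right]; auto.
      * lia.
      * intros y [<-|Hy] Hxy; [lia|]. auto.
Qed.

Lemma succ_in_ext K K' H x : (forall y, In y K <-> In y K') -> succ_in K H x = succ_in K' H x.
Proof.
  intros HK. pose proof (succ_in_spec K H x) as [A1 [A2 A3]].
  pose proof (succ_in_spec K' H x) as [B1 [B2 B3]].
  cbv zeta in *.
  destruct A1 as [A1|[A1 A1']]; destruct B1 as [B1|[B1 B1']].
  - congruence.
  - apply HK in B1. specialize (A3 _ B1 B1'). lia.
  - apply HK in A1. specialize (B3 _ A1 A1'). lia.
  - pose proof (A3 _ (proj2 (HK _) B1) B1'). pose proof (B3 _ (proj1 (HK _) A1) A1'). lia.
Qed.

Lemma pred_in_ext K K' b x : (forall y, In y K <-> In y K') -> pred_in K b x = pred_in K' b x.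
Proof.
  intros HK. pose proof (pred_in_spec K b x) as [A1 [A2 A3]].
  pose proof (pred_in_spec K' b x) as [B1 [B2 B3]].
  cbv zeta in *.
  destruct A1 as [A1|[A1 A1']]; destruct B1 as [B1|[B1 B1']].
  - congruence.
  - apply HK in B1. specialize (A3 _ B1 B1'). lia.
  - apply HK in A1. specialize (B3 _ A1 A1'). lia.
  - pose proof (A3 _ (proj2 (HK _) B1) B1'). pose proof (B3 _ (proj1 (HK _) A1) A1'). lia.
Qed.

Lemma fold_min_spec d L : let r := fold_right Nat.min d L in
  In r (d :: L) /\ forall y, In y (d :: L) -> r <= y.
Proof.
  induction L as [|a L IH]; simpl.
  - split; [auto|intros y [<-|[]]; lia].
  - destruct IH as [IH1 IH2]. split.
    + destruct (Nat.min_spec a (fold_right Nat.min d L)) as [[? ->]|[? ->]]; [tauto|].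
      destruct IH1; tauto.
    + intros y [<-|[<-|Hy]].
      * specialize (IH2 d (or_introl eq_refl)); lia.
      * lia.
      * specialize (IH2 y (or_intror Hy)); lia.
Qed.

Lemma fold_max_spec d L : let r := fold_right Nat.max d L in
  In r (d :: L) /\ forall y, In y (d :: L) -> y <= r.
Proof.
  induction L as [|a L IH]; simpl.
  - split; [auto|intros y [<-|[]]; lia].
  - destruct IH as [IH1 IH2]. split.
    + destruct (Nat.max_spec a (fold_right Nat.max d L)) as [[? ->]|[? ->]]; [|tauto].
      destruct IH1; tauto.
    + intros y [<-|[<-|Hy]].
      * specialize (IH2 d (or_introl eq_refl)); lia.
      * lia.
      * specialize (IH2 y (or_intror Hy)); lia.
Qed.

Lemma NoDup_map_mono (g : nat -> nat) K :
  NoDup K -> (forall x y, In x K -> In y K -> x < y -> g x < g y) -> NoDup (map g K).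
Proof.
  intros HN Hm. apply NoDup_map_NoDup_ForallPairs; auto.
  intros x y Hx Hy Heq. destruct (Nat.lt_total x y) as [h|[h|h]]; auto.
  - specialize (Hm _ _ Hx Hy h); lia.
  - specialize (Hm _ _ Hy Hx h); lia.
Qed.

Section Sig.
Variables (K : list nat) (s H : nat).
Hypotheses (HN : NoDup K) (Hs : In s K) (Hmin : forall y, In y K -> s <= y)
  (HH : forall y, In y K -> y < H).
Let sg := succ_in K H.

Lemma sig_gt x : In x K -> x < sg x /\ (sg x = H \/ In (sg x) K) /\ sg x <= H.
Proof.
  intros Hx. pose proof (succ_in_spec K H x) as [A1 [A2 A3]]. cbv zeta in *.
  specialize (HH x Hx). unfold sg. destruct A1 as [A1|[A1 A1']]; rewrite ?A1; repeat split; auto; lia.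
Qed.

Lemma sig_mono x y : In x K -> In y K -> x < y -> sg x < sg y.
Proof.
  intros Hx Hy Hxy. pose proof (succ_in_spec K H x) as [A1 [A2 A3]]. cbv zeta in *.
  pose proof (sig_gt y Hy). specialize (A3 y Hy Hxy). unfold sg in *. lia.
Qed.

Lemma sig_perm : Permutation (s :: map sg K) (H :: K).
Proof.
  apply NoDup_Permutation.
  - constructor.
    + intros Hin. apply in_map_iff in Hin as [x [Hx1 Hx2]].
      pose proof (sig_gt x Hx2). pose proof (Hmin x Hx2). lia.
    + apply NoDup_map_mono; auto. apply sig_mono.
  - constructor; auto. intros Hin. specialize (HH H Hin). lia.
  - intros y; split.
    + intros [<-|Hin]; [right; auto|]. apply in_map_iff in Hin as [x [<- Hx2]].
      pose proof (sig_gt x Hx2) as [_ [[->|?] _]]; [left|right]; auto.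
    + intros Hy. destruct (Nat.eq_dec y s) as [->|Hne]; [left; auto|right].
      assert (Hsy : s < y /\ y <= H /\ (y = H \/ In y K)).
      { destruct Hy as [<-|Hy]. pose proof (HH s Hs); pose proof (Hmin s Hs). lia.
        pose proof (HH y Hy); pose proof (Hmin y Hy). split; [lia|split; [lia|auto]]. }
      pose proof (pred_in_spec K s y) as [B1 [B2 B3]]. cbv zeta in *.
      set (x := pred_in K s y) in *.
      assert (HxK : In x K /\ x < y) by (destruct B1 as [->|[? ?]]; auto; split; auto; lia).
      apply in_map_iff. exists x. split; [|tauto].
      pose proof (succ_in_spec K H x) as [A1 [A2 A3]]. cbv zeta in *. unfold sg.
      set (r := succ_in K H x) in *.
      assert (r <= y).
      { destruct Hsy as [_ [_ [->|HyK]]]; auto. apply A3; auto; lia. }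
      assert (y <= r).
      { destruct A1 as [->|[A1 A1']]; [lia|].
        destruct (Nat.lt_ge_cases r y) as [h|h]; auto.
        specialize (B3 r A1 h). lia. }
      lia.
Qed.

Lemma sig_inv x : In x K -> pred_in (map sg K) s (sg x) = x.
Proof.
  intros Hx. pose proof (pred_in_spec (map sg K) s (sg x)) as [B1 [B2 B3]]. cbv zeta in *.
  set (p := pred_in (map sg K) s (sg x)) in *.
  pose proof (sig_gt x Hx) as [G1 [G2 G3]].
  assert (x <= p).
  { destruct (Nat.eq_dec x s) as [->|Hne]; auto.
    assert (In x (s :: map sg K)) by (apply (Permutation_in _ (Permutation_sym sig_perm)); right; auto).
    destruct H0 as [->|H0]; [lia|]. apply B3; auto. }
  assert (p <= x).
  { destruct B1 as [->|[B1 B1']]; [apply Hmin; auto|].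
    assert (Hp : In p (H :: K)) by (apply (Permutation_in _ sig_perm); right; auto).
    destruct Hp as [Hp|Hp]; [lia|].
    destruct (Nat.le_gt_cases p x) as [h|h]; auto.
    pose proof (succ_in_spec K H x) as [A1 [A2 A3]]. cbv zeta in *.
    specialize (A3 p Hp h). unfold sg in *. lia. }
  lia.
Qed.
End Sig.

Section Tau.
Variables (K : list nat) (b H : nat).
Hypotheses (HN : NoDup K) (HHK : In H K) (Hmax : forall y, In y K -> y <= H)
  (Hb : forall y, In y K -> b < y).
Let tu := pred_in K b.

Lemma tau_lt x : In x K -> tu x < x /\ (tu x = b \/ In (tu x) K) /\ b <= tu x.
Proof.
  intros Hx. pose proof (pred_in_spec K b x) as [A1 [A2 A3]]. cbv zeta in *.
  specialize (Hb x Hx). unfold tu. destruct A1 as [A1|[A1 A1']]; rewrite ?A1; repeat split; auto; lia.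
Qed.

Lemma tau_mono x y : In x K -> In y K -> x < y -> tu x < tu y.
Proof.
  intros Hx Hy Hxy. pose proof (pred_in_spec K b y) as [A1 [A2 A3]]. cbv zeta in *.
  pose proof (tau_lt x Hx). specialize (A3 x Hx Hxy). unfold tu in *. lia.
Qed.

Lemma tau_perm : Permutation (H :: map tu K) (b :: K).
Proof.
  apply NoDup_Permutation.
  - constructor.
    + intros Hin. apply in_map_iff in Hin as [x [Hx1 Hx2]].
      pose proof (tau_lt x Hx2). pose proof (Hmax x Hx2). lia.
    + apply NoDup_map_mono; auto. apply tau_mono.
  - constructor; auto. intros Hin. specialize (Hb b Hin). lia.
  - intros y; split.
    + intros [<-|Hin]; [right; auto|]. apply in_map_iff in Hin as [x [<- Hx2]].
      pose proof (tau_lt x Hx2) as [_ [[->|?] _]]; [left|right]; auto.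
    + intros Hy. destruct (Nat.eq_dec y H) as [->|Hne]; [left; auto|right].
      assert (Hsy : y < H /\ b <= y /\ (y = b \/ In y K)).
      { destruct Hy as [<-|Hy]. pose proof (Hb H HHK). lia.
        pose proof (Hmax y Hy); pose proof (Hb y Hy). split; [lia|split; [lia|auto]]. }
      pose proof (succ_in_spec K H y) as [B1 [B2 B3]]. cbv zeta in *.
      set (x := succ_in K H y) in *.
      assert (HxK : In x K /\ y < x) by (destruct B1 as [->|[? ?]]; auto; split; auto; lia).
      apply in_map_iff. exists x. split; [|tauto].
      pose proof (pred_in_spec K b x) as [A1 [A2 A3]]. cbv zeta in *. unfold tu.
      set (r := pred_in K b x) in *.
      assert (y <= r).
      { destruct Hsy as [_ [_ [->|HyK]]]; auto. apply A3; auto; lia. }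
      assert (r <= y).
      { destruct A1 as [->|[A1 A1']]; [lia|].
        destruct (Nat.lt_ge_cases y r) as [h|h]; auto.
        specialize (B3 r A1 h). lia. }
      lia.
Qed.

Lemma tau_inv x : In x K -> succ_in (map tu K) H (tu x) = x.
Proof.
  intros Hx. pose proof (succ_in_spec (map tu K) H (tu x)) as [B1 [B2 B3]]. cbv zeta in *.
  set (p := succ_in (map tu K) H (tu x)) in *.
  pose proof (tau_lt x Hx) as [G1 [G2 G3]].
  assert (p <= x).
  { destruct (Nat.eq_dec x H) as [->|Hne]; auto.
    assert (In x (H :: map tu K)) by (apply (Permutation_in _ (Permutation_sym tau_perm)); right; auto).
    destruct H0 as [->|H0]; [lia|]. apply B3; auto. }
  assert (x <= p).
  { destruct B1 as [->|[B1 B1']]; [apply Hmax; auto|].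
    assert (Hp : In p (b :: K)) by (apply (Permutation_in _ tau_perm); right; auto).
    destruct Hp as [Hp|Hp]; [lia|].
    destruct (Nat.le_gt_cases x p) as [h|h]; auto.
    pose proof (pred_in_spec K b x) as [A1 [A2 A3]]. cbv zeta in *.
    specialize (A3 p Hp h). unfold tu in *. lia. }
  lia.
Qed.
End Tau.

Definition dsize d := length (dlabels d).
Definition bsize t := length (blabels t).

Lemma len_flat {X} (l : X -> list nat) xs x : In x xs -> length (l x) <= length (flat_map l xs).
Proof.
  induction xs as [|y xs IH]; simpl; [tauto|]. rewrite length_app.
  intros [<-|Hx]; [lia|]. specialize (IH Hx); lia.
Qed.

Lemma dsize_child lo hi fs f : In f fs -> dsize f < dsize (DN lo hi fs).
Proof. intros Hf. unfold dsize; simpl. pose proof (len_flat dlabels fs f Hf). lia. Qed.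

Lemma bsize_child a b ts t : In t ts -> bsize t < bsize (B2 a b ts).
Proof. intros Hf. unfold bsize; simpl. pose proof (len_flat blabels ts t Hf). lia. Qed.

Lemma dsize_dmap g d : dsize (dmap g d) = dsize d.
Proof. unfold dsize. rewrite dlabels_dmap, length_map. auto. Qed.

Lemma dsize_ind (P : diamond -> Prop) :
  (forall d, (forall d', dsize d' < dsize d -> P d') -> P d) -> forall d, P d.
Proof.
  intros IH d. assert (forall m d, dsize d < m -> P d) as A.
  { induction m; intros d' Hd; [lia|]. apply IH. intros d'' Hd''. apply IHm. lia. }
  apply (A (S (dsize d))). lia.
Qed.

Lemma bsize_ind (P : btree -> Prop) :
  (forall t, (forall t', bsize t' < bsize t -> P t') -> P t) -> forall t, P t.
Proof.
  intros IH d. assert (forall m d, bsize d < m -> P d) as A.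
  { induction m; intros d' Hd; [lia|]. apply IH. intros d'' Hd''. apply IHm. lia. }
  apply (A (S (bsize d))). lia.
Qed.

Lemma NoDup_app_disj (l1 l2 : list nat) x : NoDup (l1 ++ l2) -> In x l1 -> In x l2 -> False.
Proof.
  induction l1 as [|a l1 IH]; simpl; [tauto|]. intros HN [<-|Hx] Hx2; inversion HN; subst.
  - apply H1. apply in_or_app; auto.
  - eauto.
Qed.

Lemma NoDup_flat_child {X} (l : X -> list nat) xs x : NoDup (flat_map l xs) -> In x xs -> NoDup (l x).
Proof.
  induction xs as [|y xs IH]; simpl; [tauto|]. intros HN [<-|Hx].
  - eapply NoDup_app_remove_r; eauto.
  - apply IH; auto. eapply NoDup_app_remove_l; eauto.
Qed.

Lemma perm_flat_none {X Y} (lx : X -> list nat) (ly : Y -> list nat) (F : X -> Y) xs :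
  (forall x, In x xs -> Permutation (ly (F x)) (lx x)) ->
  Permutation (flat_map ly (map F xs)) (flat_map lx xs).
Proof.
  induction xs as [|x xs IH]; simpl; intros Hp; auto.
  apply Permutation_app; auto.
Qed.

Lemma perm_flat_special {X Y} (lx : X -> list nat) (ly : Y -> list nat) (F : X -> Y) xs s e e' :
  NoDup (flat_map lx xs) -> In s (flat_map lx xs) ->
  (forall x, In x xs -> ~ In s (lx x) -> Permutation (ly (F x)) (lx x)) ->
  (forall x, In x xs -> In s (lx x) -> Permutation (e :: ly (F x)) (e' :: lx x)) ->
  Permutation (e :: flat_map ly (map F xs)) (e' :: flat_map lx xs).
Proof.
  induction xs as [|x xs IH]; simpl; [tauto|]. intros HN Hs H1 H2.
  destruct (in_dec Nat.eq_dec s (lx x)) as [Hin|Hnin].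
  - assert (Hr : Permutation (flat_map ly (map F xs)) (flat_map lx xs)).
    { apply perm_flat_none. intros y Hy. apply H1; auto. intros Hsy.
      apply (NoDup_app_disj _ _ s HN Hin). apply in_flat_map; eauto. }
    rewrite !app_comm_cons. apply Permutation_app; auto.
  - apply in_app_or in Hs. destruct Hs as [Hs|Hs]; [tauto|].
    eapply perm_trans; [apply Permutation_middle|].
    eapply perm_trans; [|apply Permutation_sym, Permutation_middle].
    apply Permutation_app; auto.
    apply IH; auto. eapply NoDup_app_remove_l; eauto.
Qed.

Lemma valid_dmap g d : valid_diamond d ->
  (forall x y, In x (dlabels d) -> In y (dlabels d) -> x < y -> g x < g y) ->
  valid_diamond (dmap g d).
Proof.
  induction d as [l|lo hi fs IH] using diamond_ind2; simpl; intros Hv Hm; [constructor|].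
  inversion Hv; subst. constructor.
  - apply Hm; auto.
  - intros f' Hf'. apply in_map_iff in Hf' as [f [<- Hf]].
    destruct (H3 f Hf) as [Hvf Hlf]. split.
    + apply IH; auto. intros x y Hx Hy. apply Hm; right; right; apply in_flat_map; eauto.
    + intros x Hx. rewrite dlabels_dmap in Hx. apply in_map_iff in Hx as [z [<- Hz]].
      specialize (Hlf z Hz). split; apply Hm; auto; try (right; right; apply in_flat_map; eauto); lia.
  - assert (flat_map dlabels (map (dmap g) fs) = map g (flat_map dlabels fs)) as ->.
    { clear. induction fs; simpl; auto. rewrite map_app, dlabels_dmap, IHfs; auto. }
    apply NoDup_map_mono; auto; intros x y Hx Hy; apply Hm; simpl; auto.
Qed.

Lemma valid_NoDup d : valid_diamond d -> NoDup (dlabels d).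
Proof.
  intros Hv; inversion Hv; subst; simpl; [constructor; auto; constructor|].
  assert (Hb : forall x, In x (flat_map dlabels fs) -> lo < x < hi).
  { intros x Hx. apply in_flat_map in Hx as [f [Hf Hx]]. apply (H0 f Hf); auto. }
  constructor; [|constructor]; auto.
  - intros [?|Hx]; [lia|]. specialize (Hb _ Hx); lia.
  - intros Hx. specialize (Hb _ Hx); lia.
Qed.

Lemma dlabels_nonnil d : dlabels d <> [].
Proof. destruct d; simpl; discriminate. Qed.

Lemma root_in t x : In x (root_labels t) -> In x (blabels t).
Proof. destruct t; simpl; tauto. Qed.

Lemma valid_btree_min t : valid_btree t -> forall x, In x (blabels t) -> hd 0 (root_labels t) <= x.
Proof.
  induction t as [t IH] using bsize_ind. intros Hv x Hx. destruct t as [a|a b ts]; simpl in *.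
  - destruct Hx as [<-|[]]; lia.
  - inversion Hv; subst. destruct Hx as [<-|[<-|Hx]]; try lia.
    apply in_flat_map in Hx as [u [Hu Hx]]. destruct (H3 u Hu) as [Hvu Hru].
    pose proof (bsize_child a b ts u Hu) as Hs.
    specialize (IH u Hs Hvu x Hx).
    assert (In (hd 0 (root_labels u)) (root_labels u)) by (destruct u; simpl; auto).
    specialize (Hru _ H). lia.
Qed.

Lemma dn_facts lo hi fs : valid_diamond (DN lo hi fs) -> fs <> [] ->
  let s := fold_right Nat.min hi (flat_map dlabels fs) in
  In s (flat_map dlabels fs) /\ (forall y, In y (flat_map dlabels fs) -> s <= y /\ lo < y < hi)
  /\ NoDup (flat_map dlabels fs) /\ lo < hi.
Proof.
  intros Hv Hne s. inversion Hv; subst.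
  assert (Hb : forall x, In x (flat_map dlabels fs) -> lo < x < hi).
  { intros x Hx. apply in_flat_map in Hx as [f [Hf Hx]]. apply (H3 f Hf); auto. }
  pose proof (fold_min_spec hi (flat_map dlabels fs)) as [A1 A2]. cbv zeta in *. fold s in A1, A2.
  assert (Hnn : flat_map dlabels fs <> []).
  { destruct fs as [|f fs]; [congruence|]. simpl. pose proof (dlabels_nonnil f).
    destruct (dlabels f); simpl; congruence. }
  split; [|split; [|split]]; auto.
  - destruct A1 as [A1|A1]; auto. exfalso.
    destruct (flat_map dlabels fs) as [|y l] eqn:E; [congruence|].
    specialize (A2 y (or_intror (or_introl eq_refl))). specialize (Hb y (or_introl eq_refl)). lia.
  - intros y Hy. split; auto. apply A2; right; auto.
Qed.

Lemma special_facts lo hi fs f s : valid_diamond (DN lo hi fs) -> In f fs -> In s (dlabels f) ->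
  (forall y, In y (flat_map dlabels fs) -> s <= y) ->
  let K := dlabels f in let sg := succ_in K hi in
  NoDup K /\ (forall y, In y K -> s <= y /\ lo < y < hi) /\ valid_diamond (dmap sg f) /\
  dsize (dmap sg f) < dsize (DN lo hi fs) /\ Permutation (s :: map sg K) (hi :: K) /\
  (forall x, In x K -> pred_in (map sg K) s (sg x) = x) /\
  (forall x, In x K -> x < sg x /\ sg x <= hi).
Proof.
  intros Hv Hf Hs Hmin K sg. inversion Hv; subst.
  destruct (H3 f Hf) as [Hvf Hlf].
  assert (HK : forall y, In y K -> s <= y /\ lo < y < hi).
  { intros y Hy. split; auto. apply Hmin. apply in_flat_map; eauto. }
  pose proof (valid_NoDup f Hvf) as HN.
  assert (Hm : forall y, In y K -> s <= y) by (intros; apply HK; auto).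
  assert (Hh : forall y, In y K -> y < hi) by (intros y Hy; apply HK in Hy; lia).
  split; [auto|split; [auto|split; [|split; [|split; [|split]]]]].
  - apply valid_dmap; auto. intros x y Hx Hy Hxy. apply (sig_mono K hi); auto.
  - rewrite dsize_dmap. apply dsize_child; auto.
  - apply sig_perm; auto.
  - intros x Hx. apply sig_inv; auto.
  - intros x Hx. pose proof (sig_gt K hi Hh x Hx) as [G1 [_ G3]]. unfold sg, K in *. lia.
Qed.

Lemma Phi_perm d : valid_diamond d -> Permutation (blabels (Phi0 d)) (dlabels d).
Proof.
  induction d as [d IH] using dsize_ind. intros Hv.
  destruct d as [l|lo hi fs]; [unfold Phi0; simpl; auto|].
  rewrite Phi0_DN. cbv zeta. simpl blabels.
  destruct fs as [|f0 fs0]; [simpl; auto|].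
  remember (f0 :: fs0) as fs eqn:Efs. assert (Hne : fs <> []) by (subst; discriminate). clear Efs.
  pose proof (dn_facts lo hi fs Hv Hne) as [Hs [Hb [HN Hlh]]]. cbv zeta in *.
  set (s := fold_right Nat.min hi (flat_map dlabels fs)) in *.
  inversion Hv; subst.
  constructor. apply perm_flat_special with (s := s); auto.
  - intros f Hf Hnin. destruct in_dec; [tauto|].
    apply IH; [apply dsize_child; auto|apply H3; auto].
  - intros f Hf Hin. destruct in_dec; [|tauto].
    assert (Hmin : forall y, In y (flat_map dlabels fs) -> s <= y) by (intros; apply Hb; auto).
    pose proof (special_facts lo hi fs f s Hv Hf Hin Hmin) as [_ [_ [Hv' [Hsz [Hp _]]]]].
    cbv zeta in *.
    eapply perm_trans; [|apply Hp]. constructor.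
    rewrite <- dlabels_dmap. apply IH; auto.
Qed.

Lemma Phi_valid d : valid_diamond d -> valid_btree (Phi0 d).
Proof.
  induction d as [d IH] using dsize_ind. intros Hv.
  destruct d as [l|lo hi fs]; [unfold Phi0; simpl; constructor|].
  pose proof (Phi_perm _ Hv) as Hperm.
  rewrite Phi0_DN in *. cbv zeta in *. simpl blabels in Hperm.
  inversion Hv; subst.
  destruct fs as [|f0 fs0]; [simpl; constructor; [auto|simpl; tauto]|].
  remember (f0 :: fs0) as fs eqn:Efs. assert (Hne : fs <> []) by (subst; discriminate). clear Efs.
  pose proof (dn_facts lo hi fs Hv Hne) as [Hs [Hb [HN Hlh]]]. cbv zeta in *.
  set (s := fold_right Nat.min hi (flat_map dlabels fs)) in *.
  constructor.
  - apply Hb; auto.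
  - intros u Hu. apply in_map_iff in Hu as [f [<- Hf]].
    destruct in_dec as [Hin|Hnin].
    + assert (Hmin : forall y, In y (flat_map dlabels fs) -> s <= y) by (intros; apply Hb; auto).
      pose proof (special_facts lo hi fs f s Hv Hf Hin Hmin) as [_ [_ [Hv' [Hsz [Hp [_ Hgt]]]]]].
      cbv zeta in *. split; [apply IH; auto|].
      intros x Hx. apply root_in in Hx.
      apply (Permutation_in _ (Phi_perm _ Hv')) in Hx. rewrite dlabels_dmap in Hx.
      apply in_map_iff in Hx as [z [<- Hz]]. specialize (Hgt z Hz).
      assert (s <= z) by (apply Hmin, in_flat_map; eauto). lia.
    + destruct (H3 f Hf) as [Hvf _]. split; [apply IH; auto; apply dsize_child; auto|].
      intros x Hx. apply root_in in Hx.
      apply (Permutation_in _ (Phi_perm _ Hvf)) in Hx.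
      assert (s <= x) by (apply Hb, in_flat_map; eauto).
      destruct (Nat.eq_dec s x); [subst; tauto|lia].
Qed.

Lemma fold_prod_map {X Y} (wx : X -> R) (wy : Y -> R) (F : X -> Y) xs :
  (forall x, In x xs -> wy (F x) = wx x) ->
  fold_right (fun u acc => (wy u * acc)%R) 1%R (map F xs) = fold_right (fun u acc => (wx u * acc)%R) 1%R xs.
Proof.
  induction xs as [|x xs IH]; simpl; intros Hw; auto. rewrite Hw, IH; auto.
Qed.

Lemma Phi_weight phi d : valid_diamond d -> wbtree phi (Phi0 d) = wdiamond phi d.
Proof.
  induction d as [d IH] using dsize_ind. intros Hv.
  destruct d as [l|lo hi fs]; [unfold Phi0; simpl; auto|].
  rewrite Phi0_DN. cbv zeta. simpl. rewrite length_map. f_equal.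
  inversion Hv; subst.
  apply fold_prod_map. intros f Hf. destruct (H3 f Hf) as [Hvf Hlf].
  destruct in_dec as [Hin|Hnin].
  - rewrite IH, wdiamond_dmap; auto.
    + rewrite dsize_dmap; apply dsize_child; auto.
    + apply valid_dmap; auto. intros x y Hx Hy Hxy.
      apply (sig_mono (dlabels f) hi); auto.
      intros y' Hy'. apply Hlf in Hy'. lia.
  - apply IH; auto. apply dsize_child; auto.
Qed.

Lemma Psi_B2 a b ts : Psi (B2 a b ts) =
  let H := fold_right Nat.max b (flat_map blabels ts) in
  DN a H (map (fun u => if in_dec Nat.eq_dec H (blabels u)
                        then dmap (pred_in (blabels u) b) (Psi u) else Psi u) ts).
Proof. reflexivity. Qed.

Lemma perm_in_iff (l l' : list nat) : Permutation l l' -> forall y, In y l <-> In y l'.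
Proof. intros Hp y; split; apply Permutation_in; auto. apply Permutation_sym; auto. Qed.

Lemma Psi_Phi d : valid_diamond d -> Psi (Phi0 d) = d.
Proof.
  induction d as [d IH] using dsize_ind. intros Hv.
  destruct d as [l|lo hi fs]; [unfold Phi0; simpl; auto|].
  pose proof (Phi_perm _ Hv) as Hperm.
  rewrite Phi0_DN in *. cbv zeta in *. simpl blabels in Hperm.
  inversion Hv; subst.
  destruct fs as [|f0 fs0]; [simpl; auto|].
  remember (f0 :: fs0) as fs eqn:Efs. assert (Hne : fs <> []) by (subst; discriminate). clear Efs.
  pose proof (dn_facts lo hi fs Hv Hne) as [Hs [Hb [HN Hlh]]]. cbv zeta in *.
  set (s := fold_right Nat.min hi (flat_map dlabels fs)) in *.
  set (F := fun f => if in_dec Nat.eq_dec s (dlabels f)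
                     then Phi0 (dmap (succ_in (dlabels f) hi) f) else Phi0 f) in *.
  apply Permutation_cons_inv in Hperm. simpl in Hperm.
  assert (Hmax : fold_right Nat.max s (flat_map blabels (map F fs)) = hi).
  { pose proof (fold_max_spec s (flat_map blabels (map F fs))) as [A1 A2]. cbv zeta in *.
    assert (hi <= fold_right Nat.max s (flat_map blabels (map F fs))).
    { apply A2. apply (Permutation_in _ (Permutation_sym Hperm)). left; auto. }
    apply (Permutation_in _ Hperm) in A1. destruct A1 as [A1|A1]; [lia|].
    specialize (Hb _ A1). lia. }
  rewrite Psi_B2. cbv zeta. rewrite Hmax. f_equal.
  rewrite map_map. transitivity (map (fun x => x) fs); [|apply map_id].
  apply map_ext_in. intros f Hf. destruct (H3 f Hf) as [Hvf Hlf]. unfold F.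
  destruct (in_dec Nat.eq_dec s (dlabels f)) as [Hin|Hnin].
  - assert (Hmin : forall y, In y (flat_map dlabels fs) -> s <= y) by (intros; apply Hb; auto).
    pose proof (special_facts lo hi fs f s Hv Hf Hin Hmin) as [HNK [HK [Hv' [Hsz [Hp [Hinv Hgt]]]]]].
    cbv zeta in *.
    pose proof (Phi_perm _ Hv') as Hp2. rewrite dlabels_dmap in Hp2.
    destruct in_dec as [Hhi|Hhi].
    + rewrite IH by auto. rewrite dmap_comp. apply dmap_id_in. intros x Hx.
      rewrite (pred_in_ext _ _ _ _ (perm_in_iff _ _ Hp2)). apply Hinv; auto.
    + exfalso. apply Hhi. apply (Permutation_in _ (Permutation_sym Hp2)).
      assert (In hi (s :: map (succ_in (dlabels f) hi) (dlabels f))) as [E|E]; auto.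
      { apply (Permutation_in _ (Permutation_sym Hp)). left; auto. }
      specialize (HK s Hin). lia.
  - destruct in_dec as [Hhi|Hhi].
    + exfalso. apply (Permutation_in _ (Phi_perm _ Hvf)) in Hhi. specialize (Hlf _ Hhi). lia.
    + apply IH; auto. apply dsize_child; auto.
Qed.

Lemma bt_facts a b ts : valid_btree (B2 a b ts) -> NoDup (blabels (B2 a b ts)) -> ts <> [] ->
  let H := fold_right Nat.max b (flat_map blabels ts) in
  In H (flat_map blabels ts) /\ (forall y, In y (flat_map blabels ts) -> b < y <= H)
  /\ NoDup (flat_map blabels ts) /\ a < b.
Proof.
  intros Hv HN Hne H. inversion Hv; subst.
  assert (Hb : forall x, In x (flat_map blabels ts) -> b < x).
  { intros x Hx. apply in_flat_map in Hx as [u [Hu Hx]]. destruct (H4 u Hu) as [Hvu Hru].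
    pose proof (valid_btree_min u Hvu x Hx).
    assert (In (hd 0 (root_labels u)) (root_labels u)) by (destruct u; simpl; auto).
    specialize (Hru _ H1). lia. }
  pose proof (fold_max_spec b (flat_map blabels ts)) as [A1 A2]. cbv zeta in *. fold H in A1, A2.
  assert (Hnn : flat_map blabels ts <> []).
  { destruct ts as [|u ts]; [congruence|]. simpl. destruct u; simpl; congruence. }
  simpl in HN. inversion HN; subst. inversion H5; subst.
  split; [|split; [|split]]; auto.
  - destruct A1 as [A1|A1]; auto. exfalso.
    destruct (flat_map blabels ts) as [|y l] eqn:E; [congruence|].
    specialize (A2 y (or_intror (or_introl eq_refl))). specialize (Hb y (or_introl eq_refl)). lia.
  - intros y Hy. split; auto. apply A2; right; auto.
Qed.

Lemma special_tree a b ts u H : valid_btree (B2 a b ts) -> NoDup (blabels (B2 a b ts)) ->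
  In u ts -> In H (blabels u) ->
  (forall y, In y (flat_map blabels ts) -> b < y <= H) ->
  let K := blabels u in let tu := pred_in K b in
  NoDup K /\ (forall y, In y K -> b < y <= H) /\
  (forall x y, In x K -> In y K -> x < y -> tu x < tu y) /\
  Permutation (H :: map tu K) (b :: K) /\
  (forall x, In x K -> succ_in (map tu K) H (tu x) = x) /\
  (forall x, In x K -> b <= tu x /\ tu x < x).
Proof.
  intros Hv HN Hu HH Hbd K tu. simpl in HN. inversion HN; subst. inversion H3; subst.
  assert (HNK : NoDup K) by (eapply NoDup_flat_child; eauto).
  assert (HK : forall y, In y K -> b < y <= H) by (intros y Hy; apply Hbd, in_flat_map; eauto).
  assert (Hb : forall y, In y K -> b < y) by (intros y Hy; apply HK in Hy; lia).
  assert (Hm : forall y, In y K -> y <= H) by (intros y Hy; apply HK in Hy; lia).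
  split; [auto|split; [auto|split; [|split; [|split]]]].
  - intros x y Hx Hy Hxy. apply (tau_mono K b); auto.
  - apply tau_perm; auto.
  - intros x Hx. apply tau_inv; auto.
  - intros x Hx. pose proof (tau_lt K b Hb x Hx) as [G1 [_ G3]]. unfold tu, K in *. lia.
Qed.

Lemma Psi_perm t : valid_btree t -> NoDup (blabels t) -> Permutation (dlabels (Psi t)) (blabels t).
Proof.
  induction t as [t IH] using bsize_ind. intros Hv HNt.
  destruct t as [a|a b ts]; [simpl; auto|].
  destruct ts as [|u0 ts0]; [simpl; auto|].
  remember (u0 :: ts0) as ts eqn:Ets. assert (Hne : ts <> []) by (subst; discriminate). clear Ets.
  pose proof (bt_facts a b ts Hv HNt Hne) as [HH [Hbd [HN Hab]]]. cbv zeta in *.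
  set (H := fold_right Nat.max b (flat_map blabels ts)) in *.
  rewrite Psi_B2. cbv zeta. fold H. simpl dlabels. simpl blabels.
  inversion Hv; subst.
  constructor. apply perm_flat_special with (s := H); auto.
  - intros u Hu Hnin. destruct in_dec; [tauto|].
    apply IH; [apply bsize_child; auto|apply H4; auto|eapply NoDup_flat_child; eauto].
  - intros u Hu Hin. destruct in_dec; [|tauto].
    pose proof (special_tree a b ts u H Hv HNt Hu Hin Hbd) as [HNK [HK [Hmono [Hp _]]]].
    cbv zeta in *. eapply perm_trans; [|apply Hp]. constructor.
    rewrite dlabels_dmap. apply Permutation_map. apply IH; auto.
    apply bsize_child; auto. apply H4; auto.
Qed.

Lemma Psi_valid t : valid_btree t -> NoDup (blabels t) -> valid_diamond (Psi t).
Proof.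
  induction t as [t IH] using bsize_ind. intros Hv HNt.
  destruct t as [a|a b ts]; [simpl; constructor|].
  pose proof (Psi_perm _ Hv HNt) as Hperm.
  inversion Hv; subst.
  destruct ts as [|u0 ts0]; [simpl; constructor; [auto|simpl; tauto|constructor]|].
  remember (u0 :: ts0) as ts eqn:Ets. assert (Hne : ts <> []) by (subst; discriminate). clear Ets.
  pose proof (bt_facts a b ts Hv HNt Hne) as [HH [Hbd [HN Hab]]]. cbv zeta in *.
  set (H := fold_right Nat.max b (flat_map blabels ts)) in *.
  rewrite Psi_B2 in *. cbv zeta in *. fold H in Hperm |- *.
  constructor.
  - pose proof (Hbd H HH). lia.
  - intros c Hc. apply in_map_iff in Hc as [u [<- Hu]].
    destruct (H3 u Hu) as [Hvu _].
    assert (HNu : NoDup (blabels u)) by (eapply NoDup_flat_child; eauto).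
    assert (Hsz : bsize u < bsize (B2 a b ts)) by (apply bsize_child; auto).
    pose proof (Psi_perm u Hvu HNu) as Hpu.
    destruct in_dec as [Hin|Hnin].
    + pose proof (special_tree a b ts u H Hv HNt Hu Hin Hbd) as [HNK [HK [Hmono [Hp [_ Htl]]]]].
      cbv zeta in *. split.
      * apply valid_dmap; auto. intros x y Hx Hy. apply Hmono; apply (Permutation_in _ Hpu); auto.
      * intros x Hx. rewrite dlabels_dmap in Hx. apply in_map_iff in Hx as [z [<- Hz]].
        apply (Permutation_in _ Hpu) in Hz. specialize (Htl z Hz). specialize (HK z Hz). lia.
    + split; [apply IH; auto|].
      intros x Hx. apply (Permutation_in _ Hpu) in Hx.
      assert (b < x <= H) by (apply Hbd, in_flat_map; eauto).
      destruct (Nat.eq_dec x H); [subst; tauto|lia].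
  - apply Permutation_sym in Hperm. apply (Permutation_NoDup Hperm) in HNt.
    simpl in HNt. apply NoDup_cons_iff in HNt as [_ HNt]. apply NoDup_cons_iff in HNt as [_ HNt]. auto.
Qed.

Lemma Phi_Psi t : valid_btree t -> NoDup (blabels t) -> Phi0 (Psi t) = t.
Proof.
  induction t as [t IH] using bsize_ind. intros Hv HNt.
  destruct t as [a|a b ts]; [reflexivity|].
  pose proof (Psi_perm _ Hv HNt) as Hperm.
  inversion Hv; subst.
  destruct ts as [|u0 ts0]; [rewrite Psi_B2, Phi0_DN; reflexivity|].
  remember (u0 :: ts0) as ts eqn:Ets. assert (Hne : ts <> []) by (subst; discriminate). clear Ets.
  pose proof (bt_facts a b ts Hv HNt Hne) as [HH [Hbd [HN Hab]]]. cbv zeta in *.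
  set (H := fold_right Nat.max b (flat_map blabels ts)) in *.
  rewrite Psi_B2 in *. cbv zeta in *. fold H in Hperm |- *.
  set (G := fun u => if in_dec Nat.eq_dec H (blabels u)
                     then dmap (pred_in (blabels u) b) (Psi u) else Psi u) in *.
  simpl in Hperm. apply Permutation_cons_inv in Hperm.
  rewrite Phi0_DN. cbv zeta.
  assert (Hmin : fold_right Nat.min H (flat_map dlabels (map G ts)) = b).
  { pose proof (fold_min_spec H (flat_map dlabels (map G ts))) as [A1 A2]. cbv zeta in *.
    assert (fold_right Nat.min H (flat_map dlabels (map G ts)) <= b).
    { apply A2. apply (Permutation_in _ (Permutation_sym Hperm)). left; auto. }
    apply (Permutation_in _ Hperm) in A1. destruct A1 as [A1|A1]; [lia|].
    specialize (Hbd _ A1). lia. }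
  rewrite Hmin. f_equal.
  rewrite map_map. transitivity (map (fun x => x) ts); [|apply map_id].
  apply map_ext_in. intros u Hu.
  destruct (H3 u Hu) as [Hvu _].
  assert (HNu : NoDup (blabels u)) by (eapply NoDup_flat_child; eauto).
  assert (Hsz : bsize u < bsize (B2 a b ts)) by (apply bsize_child; auto).
  pose proof (Psi_perm u Hvu HNu) as Hpu.
  unfold G. destruct (in_dec Nat.eq_dec H (blabels u)) as [Hin|Hnin].
  - pose proof (special_tree a b ts u H Hv HNt Hu Hin Hbd) as [HNK [HK [Hmono [Hp [Hinv Htl]]]]].
    cbv zeta in *.
    assert (Hpm : Permutation (dlabels (dmap (pred_in (blabels u) b) (Psi u)))
                              (map (pred_in (blabels u) b) (blabels u)))
      by (rewrite dlabels_dmap; apply Permutation_map; auto).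
    destruct in_dec as [Hb|Hb].
    + rewrite dmap_comp. rewrite dmap_id_in; [apply IH; auto|].
      intros x Hx. rewrite (succ_in_ext _ _ _ _ (perm_in_iff _ _ Hpm)).
      apply Hinv. apply (Permutation_in _ Hpu); auto.
    + exfalso. apply Hb. apply (Permutation_in _ (Permutation_sym Hpm)).
      assert (In b (H :: map (pred_in (blabels u) b) (blabels u))) as [E|E]; auto.
      { apply (Permutation_in _ (Permutation_sym Hp)). left; auto. }
      specialize (HK H Hin). lia.
  - destruct in_dec as [Hb|Hb].
    + exfalso. apply (Permutation_in _ Hpu) in Hb.
      assert (b < b <= H) by (apply Hbd, in_flat_map; eauto). lia.
    + apply IH; auto.
Qed.

Fixpoint lists_upto {X} (A : list X) (k : nat) : list (list X) :=
  match k with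
  | 0 => [[]]
  | S k' => [] :: flat_map (fun a => map (cons a) (lists_upto A k')) A
  end.

Lemma lists_upto_complete {X} (A : list X) k l :
  (forall x, In x l -> In x A) -> length l <= k -> In l (lists_upto A k).
Proof.
  revert l; induction k as [|k IH]; intros l Hl Hlen; simpl.
  - destruct l; simpl in *; [auto|lia].
  - destruct l as [|x l]; [left; auto|right].
    apply in_flat_map. exists x. split; [apply Hl; left; auto|].
    apply in_map. apply IH; [intros; apply Hl; right; auto|simpl in Hlen; lia].
Qed.

Fixpoint genD (labs : list nat) (m : nat) : list diamond :=
  match m with
  | 0 => []
  | S m' => map DV labs ++
      flat_map (fun lo => flat_map (fun hi => map (DN lo hi) (lists_upto (genD labs m') m')) labs) labs
  end.

Lemma len_fs_flat fs : length fs <= length (flat_map dlabels fs).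
Proof.
  induction fs as [|f fs IH]; simpl; auto. rewrite length_app.
  pose proof (dlabels_nonnil f). destruct (dlabels f); simpl; [congruence|lia].
Qed.

Lemma genD_complete labs m d : dsize d <= m -> (forall x, In x (dlabels d) -> In x labs) ->
  In d (genD labs m).
Proof.
  revert d; induction m as [|m IH]; intros d Hs Hl.
  - unfold dsize in Hs. pose proof (dlabels_nonnil d). destruct (dlabels d); simpl in *; [congruence|lia].
  - simpl. apply in_or_app. destruct d as [l|lo hi fs].
    + left. apply in_map. apply Hl; simpl; auto.
    + right. apply in_flat_map. exists lo. split; [apply Hl; simpl; auto|].
      apply in_flat_map. exists hi. split; [apply Hl; simpl; auto|].
      apply in_map. apply lists_upto_complete.
      * intros f Hf. apply IH.
        -- pose proof (len_flat dlabels fs f Hf). unfold dsize in *; simpl in Hs. lia.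
        -- intros x Hx. apply Hl. simpl. right; right. apply in_flat_map; eauto.
      * pose proof (len_fs_flat fs). unfold dsize in Hs; simpl in Hs. lia.
Qed.

From Stdlib Require Import ClassicalEpsilon.
Open Scope R_scope.

Theorem mainTheorem2 (phi : nat -> R)
  (Hphi_nonneg : forall k, 0 <= phi k) (Hphi0 : 0 < phi 0%nat)
  (n : nat) (Hn : (1 <= n)%nat) :
  (exists f : diamond -> btree,
      (forall d, is_diamond_n n d ->
         is_btree_n n (f d) /\ wbtree phi (f d) = wdiamond phi d) /\
      (forall d1 d2, is_diamond_n n d1 -> is_diamond_n n d2 ->
         f d1 = f d2 -> d1 = d2) /\
      (forall t, is_btree_n n t -> exists d, is_diamond_n n d /\ f d = t))
  /\
  (exists (ld : list diamond) (lt : list btree),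
      NoDup ld /\ (forall d, In d ld <-> is_diamond_n n d) /\
      NoDup lt /\ (forall t, In t lt <-> is_btree_n n t) /\
      sumR (map (wdiamond phi) ld) = sumR (map (wbtree phi) lt)).
Proof.
  assert (Hfwd : forall d, is_diamond_n n d ->
         is_btree_n n (Phi0 d) /\ wbtree phi (Phi0 d) = wdiamond phi d).
  { intros d [Hv Hp]. split; [split|].
    - apply Phi_valid; auto.
    - eapply perm_trans; [apply Phi_perm; auto|auto].
    - apply Phi_weight; auto. }
  assert (Hinj : forall d1 d2, is_diamond_n n d1 -> is_diamond_n n d2 ->
         Phi0 d1 = Phi0 d2 -> d1 = d2).
  { intros d1 d2 [Hv1 _] [Hv2 _] E. rewrite <- (Psi_Phi d1), <- (Psi_Phi d2), E; auto. }
  assert (Hsurj : forall t, is_btree_n n t -> exists d, is_diamond_n n d /\ Phi0 d = t).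
  { intros t [Hv Hp]. assert (HN : NoDup (blabels t)).
    { apply (Permutation_NoDup (Permutation_sym Hp)). apply seq_NoDup. }
    exists (Psi t). split; [split|].
    - apply Psi_valid; auto.
    - eapply perm_trans; [apply Psi_perm; auto|auto].
    - apply Phi_Psi; auto. }
  split; [exists Phi0; auto|].
  set (P := fun d => if excluded_middle_informative (is_diamond_n n d) then true else false).
  set (deq := fun x y : diamond => excluded_middle_informative (x = y)).
  set (ld := nodup deq (filter P (genD (seq 1 n) n))).
  assert (Hld : forall d, In d ld <-> is_diamond_n n d).
  { intros d. unfold ld. rewrite nodup_In, filter_In. unfold P. split.
    - intros [_ E]. destruct excluded_middle_informative; auto; discriminate.
    - intros Hd. split; [|destruct excluded_middle_informative; tauto].
      destruct Hd as [Hv Hp]. apply genD_complete.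
      + unfold dsize. rewrite (Permutation_length Hp), length_seq. lia.
      + intros x Hx. apply (Permutation_in _ Hp); auto. }
  exists ld, (map Phi0 ld). split; [apply NoDup_nodup|]. split; [auto|]. split; [|split].
  - apply NoDup_map_NoDup_ForallPairs; [|apply NoDup_nodup].
    intros x y Hx Hy. apply Hinj; apply Hld; auto.
  - intros t. rewrite in_map_iff. split.
    + intros [d [<- Hd]]. apply Hfwd, Hld; auto.
    + intros Ht. destruct (Hsurj t Ht) as [d [Hd E]]. exists d. split; auto. apply Hld; auto.
  - rewrite map_map. f_equal. apply map_ext_in. intros d Hd. symmetry. apply Hfwd, Hld; auto.
Qed.
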